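(* Let $ABC$ be a triangle with incenter $I$ and orthocenter $H$, and let $H_A, H_B, H_C$ be the orthocenters of the triangles $BIC$, $CIA$, $AIB$ respectively. Let $O_a, O_b, O_c$ be the circumcenters of the triangles $H_ABC$, $H_BCA$, $H_CBA$ respectively (the triangle $O_aO_bO_c$ is the Fuhrmann triangle), and let $O_A, O_B, O_C$ be the circumcenters of the triangles $AH_BH_C$, $BH_CH_A$, $CH_AH_B$ respectively (the triangle $O_AO_BO_C$ is called the Anti-Fuhrmann triangle). Then the triangle $O_AO_BO_C$ is the image of the triangle $O_aO_bO_c$ under the point reflection in the midpoint of $HI$, with $O_a \mapsto O_A$, $O_b\mapsto O_B$, $O_c\mapsto O_C$. *)

(* Defs.v *)
From HB Require Import structures.
From mathcomp Require Import all_boot all_order all_algebra.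
From mathcomp Require Import reals.
Set Implicit Arguments. Unset Strict Implicit. Unset Printing Implicit Defensive.
Import Order.TTheory GRing.Theory Num.Theory.
Local Open Scope ring_scope.

Definition point (R : realType) := (R * R)%type.

Section Geo.
Variable R : realType.
Implicit Types P Q A B C : point R.

Definition vsub P Q : point R := (P.1 - Q.1, P.2 - Q.2).
Definition dot P Q : R := P.1 * Q.1 + P.2 * Q.2.
Definition cross P Q : R := P.1 * Q.2 - P.2 * Q.1.
Definition sqdist P Q : R := dot (vsub P Q) (vsub P Q).

Definition noncollinear A B C : Prop := cross (vsub B A) (vsub C A) != 0.

Definition strictly_inside P A B C : Prop :=
  let s1 := cross (vsub B A) (vsub P A) in
  let s2 := cross (vsub C B) (vsub P B) in
  let s3 := cross (vsub A C) (vsub P C) in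
  (0 < s1 /\ 0 < s2 /\ 0 < s3) \/ (s1 < 0 /\ s2 < 0 /\ s3 < 0).

Definition sqdist_line P A B : R :=
  (cross (vsub B A) (vsub P A)) ^+ 2 / sqdist A B.

Definition is_incenter I A B C : Prop :=
  strictly_inside I A B C /\
  sqdist_line I B C = sqdist_line I C A /\
  sqdist_line I C A = sqdist_line I A B.

Definition is_orthocenter H A B C : Prop :=
  dot (vsub H A) (vsub C B) = 0 /\
  dot (vsub H B) (vsub A C) = 0 /\
  dot (vsub H C) (vsub B A) = 0.

Definition is_circumcenter O A B C : Prop :=
  sqdist O A = sqdist O B /\ sqdist O B = sqdist O C.

Definition midpoint P Q : point R := ((P.1 + Q.1) / 2%:R, (P.2 + Q.2) / 2%:R).

Definition point_reflection M P : point R := (2%:R * M.1 - P.1, 2%:R * M.2 - P.2).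

End Geo.

(* Main.v *)
Require Import Defs.
From HB Require Import structures.
From mathcomp Require Import all_boot all_order all_algebra.
From mathcomp Require Import reals.
From mathcomp Require Import ring lra.
Set Implicit Arguments. Unset Strict Implicit. Unset Printing Implicit Defensive.
Import Order.TTheory GRing.Theory Num.Theory.
Local Open Scope ring_scope.

Section Gen.
Variable R : realType.
Implicit Types u v d X Y Z : point R.

Lemma lcomb1 (x y x1 y1 c1 : R) : x1 = y1 ->
  x - y = c1 * (x1 - y1) -> x = y.
Proof. by move=> -> ; rewrite subrr mulr0 => /eqP; rewrite subr_eq0 => /eqP. Qed.

Lemma lcomb2 (x y x1 y1 x2 y2 c1 c2 : R) : x1 = y1 -> x2 = y2 ->
  x - y = c1 * (x1 - y1) + c2 * (x2 - y2) -> x = y.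
Proof. by move=> -> ->; rewrite !subrr !mulr0 addr0 => /eqP; rewrite subr_eq0 => /eqP. Qed.

Lemma U1 d u v : dot d u = 0 -> dot d v = 0 -> cross u v != 0 -> d = (0, 0).
Proof.
case: d u v => [d1 d2] [u1 u2] [v1 v2]; rewrite /dot /cross /= => e1 e2 nz.
have h1 : d1 * (u1 * v2 - u2 * v1) = 0.
  by apply: (lcomb2 (c1:=v2) (c2:=(- u2)) e1 e2); ring.
have h2 : d2 * (u1 * v2 - u2 * v1) = 0.
  by apply: (lcomb2 (c1:=(- v1)) (c2:=u1) e1 e2); ring.
move/eqP: h1; move/eqP: h2; rewrite !mulf_eq0 (negbTE nz) !orbF => /eqP -> /eqP -> //.
Qed.

Lemma pt_eq u v : vsub u v = (0, 0) -> u = v.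
Proof.
case: u v => [u1 u2] [v1 v2]; rewrite /vsub /= => [[/eqP h1 /eqP h2]].
by move: h1 h2; rewrite !subr_eq0 => /eqP -> /eqP ->.
Qed.

Lemma orth_uniq H1 H2 X Y Z : is_orthocenter H1 X Y Z -> is_orthocenter H2 X Y Z ->
  cross (vsub Z Y) (vsub X Z) != 0 -> H1 = H2.
Proof.
move=> [e1 [e2 _]] [f1 [f2 _]] nz; apply: pt_eq; apply: (U1 _ _ nz).
  by apply: (lcomb2 (c1:=1) (c2:=(-1)) e1 f1); rewrite /dot /vsub /=; ring.
by apply: (lcomb2 (c1:=1) (c2:=(-1)) e2 f2); rewrite /dot /vsub /=; ring.
Qed.

Lemma circ_uniq O1 O2 X Y Z : is_circumcenter O1 X Y Z -> is_circumcenter O2 X Y Z ->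
  cross (vsub Y X) (vsub Z Y) != 0 -> O1 = O2.
Proof.
move=> [e1 e2] [f1 f2] nz; apply: pt_eq; apply: (U1 _ _ nz).
  by apply: (lcomb2 (c1:=(1/2%:R)) (c2:=(-1/2%:R)) e1 f1); rewrite /sqdist /dot /vsub /=; field.
by apply: (lcomb2 (c1:=(1/2%:R)) (c2:=(-1/2%:R)) e2 f2); rewrite /sqdist /dot /vsub /=; field.
Qed.

Lemma cross_cyc X Y Z : cross (vsub Z Y) (vsub X Z) = cross (vsub Y X) (vsub Z X).
Proof. by rewrite /cross /vsub /=; ring. Qed.
Lemma cross_anti u v : cross u v = - cross v u.
Proof. by rewrite /cross; ring. Qed.

Lemma bary X Y Z T :
  let s1 := cross (vsub Y X) (vsub T X) in
  let s2 := cross (vsub Z Y) (vsub T Y) in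
  let s3 := cross (vsub X Z) (vsub T Z) in
  [/\ (s1 + s2 + s3) * T.1 = s2 * X.1 + s3 * Y.1 + s1 * Z.1,
      (s1 + s2 + s3) * T.2 = s2 * X.2 + s3 * Y.2 + s1 * Z.2 &
      s1 + s2 + s3 = cross (vsub Y X) (vsub Z X)].
Proof. by rewrite /cross /vsub /=; split; ring. Qed.

Lemma lcomb4 (x y x1 y1 x2 y2 x3 y3 x4 y4 c1 c2 c3 c4 : R) :
  x1 = y1 -> x2 = y2 -> x3 = y3 -> x4 = y4 ->
  x - y = c1 * (x1 - y1) + c2 * (x2 - y2) + c3 * (x3 - y3) + c4 * (x4 - y4) -> x = y.
Proof. by move=> -> -> -> ->; rewrite !subrr !mulr0 !addr0 => /eqP; rewrite subr_eq0 => /eqP. Qed.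
Lemma inside_nz P X Y Z : strictly_inside P X Y Z ->
  [/\ cross (vsub Y X) (vsub P X) != 0, cross (vsub Z Y) (vsub P Y) != 0 &
      cross (vsub X Z) (vsub P Z) != 0].
Proof. by rewrite /strictly_inside; case=> [[g1 [g2 g3]]|[g1 [g2 g3]]]; split; apply/eqP => ?; lra. Qed.
Lemma prod_nz (x y z : R) : x * y = 4%:R * z ^+ 2 -> z != 0 -> x != 0 /\ y != 0.
Proof.
move=> e hz; have : x * y != 0 by rewrite e mulf_neq0 ?expf_neq0 // pnatr_eq0.
by rewrite mulf_eq0 negb_or => /andP[].
Qed.
End Gen.

Section Core.
Variable R : realType.
Implicit Types u v p q r O : point R.

Definition padd u v : point R := (u.1 + v.1, u.2 + v.2).
Definition psc (t : R) u : point R := (t * u.1, t * u.2).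
Definition cm u v : point R := (u.1 * v.1 - u.2 * v.2, u.1 * v.2 + u.2 * v.1).
Definition nrm u : R := u.1 ^+ 2 + u.2 ^+ 2.
Definition hs p : point R := ((p.1 ^+ 2 - p.2 ^+ 2) / nrm p, 2%:R * p.1 * p.2 / nrm p).
Definition fr O (k : R) u := padd O (psc k u).

Variables (O : point R) (k : R) (p q r : point R).
Hypothesis k0 : k != 0.
Hypothesis np : nrm p != 0.
Hypothesis nq : nrm q != 0.
Hypothesis nr : nrm r != 0.

Let a := hs p.
Let b := hs q.
Let c := hs r.
Definition cA := fr O k (cm a a).
Definition cB := fr O k (cm b b).
Definition cC := fr O k (cm c c).
Definition cI := fr O k (psc (-1) (padd (cm a b) (padd (cm b c) (cm c a)))).
Definition cH := fr O k (padd (cm a a) (padd (cm b b) (cm c c))).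
Definition cHA := fr O k (padd (padd (cm b b) (cm c c)) (padd (cm b c) (psc (-1) (padd (cm a b) (cm c a))))).
Definition cHB := fr O k (padd (padd (cm c c) (cm a a)) (padd (cm c a) (psc (-1) (padd (cm b c) (cm a b))))).
Definition cHC := fr O k (padd (padd (cm a a) (cm b b)) (padd (cm a b) (psc (-1) (padd (cm c a) (cm b c))))).
Definition cOa := fr O k (padd (padd (cm b b) (cm c c)) (cm b c)).
Definition cOb := fr O k (padd (padd (cm c c) (cm a a)) (cm c a)).
Definition cOc := fr O k (padd (padd (cm a a) (cm b b)) (cm a b)).
Definition cOA := fr O k (padd (cm a a) (psc (-1) (padd (padd (cm a b) (cm c a)) (psc 2%:R (cm b c))))).
Definition cOB := fr O k (padd (cm b b) (psc (-1) (padd (padd (cm b c) (cm a b)) (psc 2%:R (cm c a))))).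
Definition cOC := fr O k (padd (cm c c) (psc (-1) (padd (padd (cm c a) (cm b c)) (psc 2%:R (cm a b))))).

Ltac unf := cbv beta iota delta [cA cB cC cI cH cHA cHB cHC cOa cOb cOc cOA cOB cOC
  a b c fr padd psc cm hs nrm is_orthocenter is_circumcenter sqdist dot vsub cross
  point_reflection midpoint fst snd].

Lemma F_H : is_orthocenter cH cA cB cC.
Proof. unf; split; [|split]; field; by rewrite -/(nrm _) ?np ?nq ?nr. Qed.
Ltac fld := field; rewrite -?/(nrm _) ?np ?nq ?nr //.
Lemma F_HA : is_orthocenter cHA cB cI cC.
Proof. unf; split; [|split]; fld. Qed.
Lemma F_HB : is_orthocenter cHB cC cI cA.
Proof. unf; split; [|split]; fld. Qed.
Lemma F_HC : is_orthocenter cHC cA cI cB.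
Proof. unf; split; [|split]; fld. Qed.
Lemma F_Oa : is_circumcenter cOa cHA cB cC.
Proof. unf; split; fld. Qed.
Lemma F_Ob : is_circumcenter cOb cHB cC cA.
Proof. unf; split; fld. Qed.
Lemma F_Oc : is_circumcenter cOc cHC cB cA.
Proof. unf; split; fld. Qed.
Lemma F_OA : is_circumcenter cOA cA cHB cHC.
Proof. unf; split; fld. Qed.
Lemma F_OB : is_circumcenter cOB cB cHC cHA.
Proof. unf; split; fld. Qed.
Lemma F_OC : is_circumcenter cOC cC cHA cHB.
Proof. unf; split; fld. Qed.
Lemma F_refl : cOA = point_reflection (midpoint cH cI) cOa /\ cOB = point_reflection (midpoint cH cI) cOb /\ cOC = point_reflection (midpoint cH cI) cOc.
Proof. unf; split; [|split]; congr (_, _); fld. Qed.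
Definition cab := cross a b.
Definition cbc := cross b c.
Definition cca := cross c a.
Ltac unf2 := cbv beta iota delta [cA cB cC cI cH cHA cHB cHC cOa cOb cOc cOA cOB cOC cab cbc cca
  a b c fr padd psc cm hs nrm is_orthocenter is_circumcenter sqdist dot vsub cross
  point_reflection midpoint fst snd].
Lemma N_AB : sqdist cA cB = (2%:R * k * cab) ^+ 2.
Proof. unf2; fld. Qed.
Lemma N_BC : sqdist cB cC = (2%:R * k * cbc) ^+ 2.
Proof. unf2; fld. Qed.
Lemma N_CA : sqdist cC cA = (2%:R * k * cca) ^+ 2.
Proof. unf2; fld. Qed.
Lemma N_Oa : cross (vsub cB cHA) (vsub cC cB) = - k ^+ 2 * nrm (padd b c) * (cab + cbc + cca).
Proof. unf2; fld. Qed.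
Lemma N_Ob : cross (vsub cC cHB) (vsub cA cC) = - k ^+ 2 * nrm (padd c a) * (cab + cbc + cca).
Proof. unf2; fld. Qed.
Lemma N_Oc : cross (vsub cB cHC) (vsub cA cB) = k ^+ 2 * nrm (padd a b) * (cab + cbc + cca).
Proof. unf2; fld. Qed.
Lemma N_OA : cross (vsub cHB cA) (vsub cHC cHB) = - k ^+ 2 * nrm (padd c (psc (-1) b)) * (cca + cab - cbc).
Proof. unf2; fld. Qed.
Lemma N_OB : cross (vsub cHC cB) (vsub cHA cHC) = - k ^+ 2 * nrm (padd a (psc (-1) c)) * (cab + cbc - cca).
Proof. unf2; fld. Qed.
Lemma N_OC : cross (vsub cHA cC) (vsub cHB cHA) = - k ^+ 2 * nrm (padd b (psc (-1) a)) * (cbc + cca - cab).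
Proof. unf2; fld. Qed.
Lemma N_bc : nrm (padd b c) * nrm (padd c (psc (-1) b)) = 4%:R * cbc ^+ 2.
Proof. unf2; fld. Qed.
Lemma N_ca : nrm (padd c a) * nrm (padd a (psc (-1) c)) = 4%:R * cca ^+ 2.
Proof. unf2; fld. Qed.
Lemma N_ab : nrm (padd a b) * nrm (padd b (psc (-1) a)) = 4%:R * cab ^+ 2.
Proof. unf2; fld. Qed.
Lemma N_cab : cab = 2%:R * dot p q * cross p q / (nrm p * nrm q).
Proof. unf2; fld. Qed.
Lemma N_cbc : cbc = 2%:R * dot q r * cross q r / (nrm q * nrm r).
Proof. unf2; fld. Qed.
Lemma N_cca : cca = 2%:R * dot r p * cross r p / (nrm r * nrm p).
Proof. unf2; fld. Qed.
Lemma N_A1 : cca + cab - cbc = 4%:R * dot p r * dot p q * cross r q / (nrm p * nrm q * nrm r).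
Proof. unf2; fld. Qed.
Lemma N_B1 : cab + cbc - cca = 4%:R * dot q p * dot q r * cross p r / (nrm p * nrm q * nrm r).
Proof. unf2; fld. Qed.
Lemma N_C1 : cbc + cca - cab = 4%:R * dot r q * dot r p * cross q p / (nrm p * nrm q * nrm r).
Proof. unf2; fld. Qed.
Lemma N_I1 : (cab + cbc + cca) * cI.1 = cbc * cA.1 + cca * cB.1 + cab * cC.1.
Proof. unf2; fld. Qed.
Lemma N_I2 : (cab + cbc + cca) * cI.2 = cbc * cA.2 + cca * cB.2 + cab * cC.2.
Proof. unf2; fld. Qed.
Arguments cA : simpl never.
Arguments cB : simpl never.
Arguments cC : simpl never.
Arguments cI : simpl never.

Lemma incenter_eq I :
  (0 < cab /\ 0 < cbc /\ 0 < cca) \/ (cab < 0 /\ cbc < 0 /\ cca < 0) ->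
  noncollinear cA cB cC -> is_incenter I cA cB cC -> I = cI.
Proof.
move=> Hs Hnc [Hin [E23 E31]].
have [hab hbc hca] : [/\ cab != 0, cbc != 0 & cca != 0].
  by case: Hs => [[h1 [h2 h3]]|[h1 [h2 h3]]]; split; apply/eqP => ?; lra.
have hS : cab + cbc + cca != 0.
  by case: Hs => [[h1 [h2 h3]]|[h1 [h2 h3]]]; apply/eqP => ?; lra.
move: Hin E23 E31; rewrite /strictly_inside /sqdist_line N_AB N_BC N_CA; cbv zeta.
set s1 := cross (vsub cB cA) (vsub I cA).
set s2 := cross (vsub cC cB) (vsub I cB).
set s3 := cross (vsub cA cC) (vsub I cC).
move=> Hin E23 E31.
have G1 : (s2 * cca) ^+ 2 = (s3 * cbc) ^+ 2.
  apply: (lcomb1 (c1:=4%:R * k ^+ 2 * cbc ^+ 2 * cca ^+ 2) E23).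
  by field; rewrite ?mulf_neq0 ?k0 ?hbc ?hca.
have G2 : (s3 * cab) ^+ 2 = (s1 * cca) ^+ 2.
  apply: (lcomb1 (c1:=4%:R * k ^+ 2 * cca ^+ 2 * cab ^+ 2) E31).
  by field; rewrite ?mulf_neq0 ?k0 ?hab ?hca.
have F1 : s2 * cca = s3 * cbc.
  move/eqP: G1; rewrite eqf_sqr => /orP [/eqP //|/eqP F].
  by exfalso; case: Hs Hin => [[h1 [h2 h3]]|[h1 [h2 h3]]] [[g1 [g2 g3]]|[g1 [g2 g3]]]; nra.
have F2 : s3 * cab = s1 * cca.
  move/eqP: G2; rewrite eqf_sqr => /orP [/eqP //|/eqP F].
  by exfalso; case: Hs Hin => [[h1 [h2 h3]]|[h1 [h2 h3]]] [[g1 [g2 g3]]|[g1 [g2 g3]]]; nra.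
have F3 : s1 * cbc = s2 * cab.
  apply: (mulIf hca).
  by apply: (lcomb2 (c1:=(- cbc)) (c2:=(- cab)) F2 F1); ring.
have s2n : s2 != 0.
  by case: Hin => [[g1 [g2 g3]]|[g1 [g2 g3]]]; apply/eqP => ?; lra.
have [B1 B2 _] := bary cA cB cC I.
rewrite -/s1 -/s2 -/s3 in B1 B2.
have hh : s2 * (cab + cbc + cca) != 0 by rewrite mulf_neq0.
have e1 : I.1 = cI.1.
  apply: (mulfI hh).
  by apply: (lcomb4 (c1:=cbc) (c2:=(I.1 - cB.1)) (c3:=(cC.1 - I.1)) (c4:=(- s2)) B1 F1 F3 N_I1); ring.
have e2 : I.2 = cI.2.
  apply: (mulfI hh).
  by apply: (lcomb4 (c1:=cbc) (c2:=(I.2 - cB.2)) (c3:=(cC.2 - I.2)) (c4:=(- s2)) B2 F1 F3 N_I2); ring.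
by apply: pt_eq; rewrite /vsub e1 e2 !subrr.
Qed.


Arguments cH : simpl never.
Arguments cHA : simpl never.
Arguments cHB : simpl never.
Arguments cHC : simpl never.

Lemma signs_nz :
  (0 < cab /\ 0 < cbc /\ 0 < cca) \/ (cab < 0 /\ cbc < 0 /\ cca < 0) ->
  [/\ cab != 0, cbc != 0, cca != 0 & cab + cbc + cca != 0].
Proof. by case=> [[h1 [h2 h3]]|[h1 [h2 h3]]]; split; apply/eqP => ?; lra. Qed.

Lemma assembly (I H HA HB HC Oa Ob Oc OA OB OC : point R) :
  (0 < cab /\ 0 < cbc /\ 0 < cca) \/ (cab < 0 /\ cbc < 0 /\ cca < 0) ->
  noncollinear cA cB cC ->
  is_incenter I cA cB cC ->
  is_orthocenter H cA cB cC ->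
  is_orthocenter HA cB I cC ->
  is_orthocenter HB cC I cA ->
  is_orthocenter HC cA I cB ->
  is_circumcenter Oa HA cB cC ->
  is_circumcenter Ob HB cC cA ->
  is_circumcenter Oc HC cB cA ->
  is_circumcenter OA cA HB HC ->
  is_circumcenter OB cB HC HA ->
  is_circumcenter OC cC HA HB ->
  OA = point_reflection (midpoint H I) Oa /\
  OB = point_reflection (midpoint H I) Ob /\
  OC = point_reflection (midpoint H I) Oc.
Proof.
move=> Hs Hnc Hin HH HHA HHB HHC HOa HOb HOc HOA HOB HOC.
have eI := incenter_eq Hs Hnc Hin.
have [hab hbc hca hS] := signs_nz Hs.
subst I.
have [s1n s2n s3n] := inside_nz Hin.1.
have eH : H = cH.
  by apply: (orth_uniq HH F_H); rewrite cross_cyc.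
have eHA : HA = cHA.
  by apply: (orth_uniq HHA F_HA); rewrite cross_cyc cross_anti oppr_eq0.
have eHB : HB = cHB.
  by apply: (orth_uniq HHB F_HB); rewrite cross_cyc cross_anti oppr_eq0.
have eHC : HC = cHC.
  by apply: (orth_uniq HHC F_HC); rewrite cross_cyc cross_anti oppr_eq0.
subst H HA HB HC.
have nbc : nrm (padd b c) != 0.
  by have [? ?] := prod_nz N_bc hbc.
have nbc' : nrm (padd c (psc (-1) b)) != 0.
  by have [? ?] := prod_nz N_bc hbc.
have nca : nrm (padd c a) != 0.
  by have [? ?] := prod_nz N_ca hca.
have nca' : nrm (padd a (psc (-1) c)) != 0.
  by have [? ?] := prod_nz N_ca hca.
have nab : nrm (padd a b) != 0.
  by have [? ?] := prod_nz N_ab hab.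
have nab' : nrm (padd b (psc (-1) a)) != 0.
  by have [? ?] := prod_nz N_ab hab.
have [dpq cpq] : dot p q != 0 /\ cross p q != 0.
  by move: hab; rewrite N_cab !mulf_eq0 !invr_eq0 !negb_or => /andP[/andP[/andP[_ ->] ->] _].
have [dqr cqr] : dot q r != 0 /\ cross q r != 0.
  by move: hbc; rewrite N_cbc !mulf_eq0 !invr_eq0 !negb_or => /andP[/andP[/andP[_ ->] ->] _].
have [drp crp] : dot r p != 0 /\ cross r p != 0.
  by move: hca; rewrite N_cca !mulf_eq0 !invr_eq0 !negb_or => /andP[/andP[/andP[_ ->] ->] _].
have dcomm : forall u v : point R, dot u v = dot v u by move=> u v; rewrite /dot mulrC [u.2 * _]mulrC.
have dpr : dot p r != 0 by rewrite dcomm.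
have dqp : dot q p != 0 by rewrite dcomm.
have drq : dot r q != 0 by rewrite dcomm.
have crq : cross r q != 0 by rewrite cross_anti oppr_eq0.
have cpr : cross p r != 0 by rewrite cross_anti oppr_eq0.
have cqp : cross q p != 0 by rewrite cross_anti oppr_eq0.
have k2 : k ^+ 2 != 0 by rewrite expf_eq0 /= k0.
have nN : nrm p * nrm q * nrm r != 0 by rewrite !mulf_neq0.
have eOa : Oa = cOa.
  by apply: (circ_uniq HOa F_Oa); rewrite N_Oa !mulf_neq0 // oppr_eq0 k2.
have eOb : Ob = cOb.
  by apply: (circ_uniq HOb F_Ob); rewrite N_Ob !mulf_neq0 // oppr_eq0 k2.
have eOc : Oc = cOc.
  by apply: (circ_uniq HOc F_Oc); rewrite N_Oc !mulf_neq0.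
have eOA : OA = cOA.
  apply: (circ_uniq HOA F_OA); rewrite N_OA !mulf_neq0 // ?oppr_eq0 ?k2 //.
  by rewrite N_A1 !mulf_neq0 ?invr_eq0 ?pnatr_eq0.
have eOB : OB = cOB.
  apply: (circ_uniq HOB F_OB); rewrite N_OB !mulf_neq0 // ?oppr_eq0 ?k2 //.
  by rewrite N_B1 !mulf_neq0 ?invr_eq0 ?pnatr_eq0.
have eOC : OC = cOC.
  apply: (circ_uniq HOC F_OC); rewrite N_OC !mulf_neq0 // ?oppr_eq0 ?k2 //.
  by rewrite N_C1 !mulf_neq0 ?invr_eq0 ?pnatr_eq0.
subst; exact: F_refl.
Qed.
End Core.

Section Frame.
Variable R : realType.
Implicit Types u v p q r X Y Z O : point R.

Definition rot p : point R := (- p.2, p.1).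
Definition neg p : point R := (- p.1, - p.2).

Lemma rot_facts p : nrm p != 0 -> nrm (rot p) != 0 /\ hs (rot p) = neg (hs p).
Proof.
move=> np; have e : nrm (rot p) = nrm p by rewrite /nrm /rot /=; ring.
split; first by rewrite e.
rewrite /hs e /neg /rot /=; congr (_, _); field; exact: np.
Qed.

Lemma cross_negl u v : cross (neg u) v = - cross u v.
Proof. by rewrite /cross /neg /=; ring. Qed.
Lemma cross_negr u v : cross u (neg v) = - cross u v.
Proof. by rewrite /cross /neg /=; ring. Qed.
Lemma cm_neg u : cm (neg u) (neg u) = cm u u.
Proof. by rewrite /cm /neg /=; congr (_, _); ring. Qed.

Definition sgn3 p q r : Prop :=
  (0 < cab p q /\ 0 < cbc q r /\ 0 < cca p r) \/ (cab p q < 0 /\ cbc q r < 0 /\ cca p r < 0).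

Lemma neg_lt (x : R) : x <= 0 -> x != 0 -> x < 0.
Proof. by move=> h1 h2; rewrite lt_neqAle h2 h1. Qed.

Lemma sign_adjust p q r : nrm q != 0 -> nrm r != 0 ->
  cab p q != 0 -> cbc q r != 0 -> cca p r != 0 ->
  exists q' r', [/\ nrm q' != 0, nrm r' != 0, cm (hs q') (hs q') = cm (hs q) (hs q),
     cm (hs r') (hs r') = cm (hs r) (hs r) & sgn3 p q' r'].
Proof.
rewrite /cab /cbc /cca => nq nr h1 h2 h3.
have [q1 [nq1 eq1 pos1 nz1]] : exists q1, [/\ nrm q1 != 0, cm (hs q1) (hs q1) = cm (hs q) (hs q),
    0 < cross (hs p) (hs q1) & cross (hs q1) (hs r) != 0].
  case: (ltrP 0 (cross (hs p) (hs q))) => h; first by exists q.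
  have [nr' er] := rot_facts nq.
  exists (rot q); rewrite er cross_negr cross_negl cm_neg oppr_gt0 oppr_eq0; split => //.
  exact: neg_lt.
have [r1 [nr1 er1 pos2 nz2]] : exists r1, [/\ nrm r1 != 0, cm (hs r1) (hs r1) = cm (hs r) (hs r),
    0 < cross (hs q1) (hs r1) & cross (hs r1) (hs p) != 0].
  case: (ltrP 0 (cross (hs q1) (hs r))) => h; first by exists r.
  have [nr' er] := rot_facts nr.
  exists (rot r); rewrite er cross_negr cross_negl cm_neg oppr_gt0 oppr_eq0; split => //.
  exact: neg_lt.
case: (ltrP 0 (cross (hs r1) (hs p))) => h.
  by exists q1, r1; split => //; left; rewrite /cab /cbc /cca.
have [nq2 eq2] := rot_facts nq1.
exists (rot q1), r1; split => //; first by rewrite eq2 cm_neg.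
right; rewrite /cab /cbc /cca eq2 cross_negr cross_negl !oppr_lt0; split => //; split => //.
exact: neg_lt.
Qed.

Lemma HS u : nrm u = 1 -> exists p, nrm p != 0 /\ hs p = u.
Proof.
case: u => u1 u2; rewrite /nrm /= => hu.
case: (eqVneq u1 (-1)) => h1.
  have hu2 : u2 = 0.
    by apply/eqP; rewrite -sqrf_eq0; apply/eqP; move: hu; rewrite h1; lra.
  exists (0, 1); rewrite /hs /nrm /= h1 hu2; split; first by rewrite expr0n /= add0r expr1n oner_eq0.
  by congr (_, _); field.
have h1' : 1 + u1 != 0 by apply: contra_neq h1 => h; lra.
have hN : (1 + u1) ^+ 2 + u2 ^+ 2 = 2%:R * (1 + u1).
  by apply: (lcomb1 (c1:=1) hu); ring.
exists (1 + u1, u2); rewrite /hs /nrm /= hN; split.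
  by rewrite mulf_neq0 // pnatr_eq0.
congr (_, _).
  by apply: (lcomb1 (c1:=(-1/(2%:R * (1 + u1)))) hu); field.
by field.
Qed.

Lemma SQ u : nrm u = 1 -> exists p, nrm p != 0 /\ cm (hs p) (hs p) = u.
Proof.
move=> hu; have [p0 [np0 e0]] := HS hu.
have pos : 0 < nrm p0 by rewrite lt_neqAle eq_sym np0 /nrm addr_ge0 // sqr_ge0.
set s := Num.sqrt (nrm p0).
have s0 : s != 0 by rewrite gt_eqF // sqrtr_gt0.
have s2 : s ^+ 2 = nrm p0 by rewrite sqr_sqrtr // ltW.
have [p [np e]] : exists p, nrm p != 0 /\ hs p = (p0.1 / s, p0.2 / s).
  apply: HS; rewrite /nrm /=; apply: (lcomb1 (c1:= -1 / s ^+ 2) s2); rewrite /nrm; field; exact: s0.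
exists p; split => //; rewrite e -e0 /hs -s2 /cm /=; congr (_, _); field; exact: s0.
Qed.

Lemma sqdist0 X Y : sqdist X Y = 0 -> X = Y.
Proof.
case: X Y => [x1 x2] [y1 y2]; rewrite /sqdist /dot /vsub /= => /eqP.
by rewrite -!expr2 paddr_eq0 ?sqr_ge0 // !sqrf_eq0 !subr_eq0 => /andP[/eqP -> /eqP ->].
Qed.

Definition circO (A B C : point R) : point R :=
  (A.1 + (nrm (vsub B A) * (vsub C A).2 - nrm (vsub C A) * (vsub B A).2) / (2%:R * cross (vsub B A) (vsub C A)),
   A.2 + (nrm (vsub C A) * (vsub B A).1 - nrm (vsub B A) * (vsub C A).1) / (2%:R * cross (vsub B A) (vsub C A))).

Lemma circO_spec (A B C : point R) : cross (vsub B A) (vsub C A) != 0 ->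
  sqdist (circO A B C) B = sqdist (circO A B C) A /\ sqdist (circO A B C) C = sqdist (circO A B C) A.
Proof.
case: A B C => [a1 a2] [b1 b2] [c1 c2].
rewrite /circO /sqdist /dot /vsub /nrm /cross /= => hD; by split; field.
Qed.

Lemma frame (A B C : point R) : noncollinear A B C ->
  exists O k p q r, k != 0 /\ nrm p != 0 /\ nrm q != 0 /\ nrm r != 0 /\
    A = cA O k p /\ B = cB O k q /\ C = cC O k r /\ sgn3 p q r.
Proof.
rewrite /noncollinear => hD.
have [eOB eOC] := circO_spec hD.
set O := circO A B C in eOB eOC *.
clearbody O.
set rho := sqdist O A.
have rho_ge : 0 <= rho by rewrite /rho /sqdist /dot addr_ge0 // -expr2 sqr_ge0.
have rho0 : rho != 0.
  apply/eqP => h; move: hD; have eA := sqdist0 h; have eB := sqdist0 (etrans eOB h).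
  by rewrite -eA -eB /cross /vsub /= !subrr !mul0r subrr eqxx.
have rpos : 0 < rho by rewrite lt_neqAle eq_sym rho0.
set k := Num.sqrt rho.
have k0 : k != 0 by rewrite gt_eqF // sqrtr_gt0.
have k2 : k ^+ 2 = rho by rewrite sqr_sqrtr.
have erho : sqdist O A = rho by [].
clearbody k. clearbody rho.
have getp : forall X, sqdist O X = rho -> exists p, nrm p != 0 /\ X = cA O k p.
  move=> X hX.
  have [p [np e]] := @SQ ((X.1 - O.1) / k, (X.2 - O.2) / k)
   ltac:(rewrite /nrm /=; apply: (lcomb2 (c1:=1/k^+2) (c2:=-1/k^+2) hX k2); rewrite /sqdist /dot /vsub /=; field; exact: k0).
  exists p; split => //.
  have -> : cA O k p = fr O k (cm (hs p) (hs p)) by [].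
  rewrite e /fr /padd /psc /=; case: (X) => x1 x2 /=; congr (_, _); field; exact: k0.
have [p [np eA]] := getp A erho.
have [q [nq eB0]] := getp B (etrans eOB erho).
have eB : B = cB O k q by rewrite eB0.
have [r [nr eC0]] := getp C (etrans eOC erho).
have eC : C = cC O k r by rewrite eC0.
have hab : cab p q != 0.
  apply/eqP => h; move: (N_AB O k np nq); rewrite -eA -eB h mulr0 expr0n /= => /sqdist0 e.
  by move: hD; rewrite e /cross /vsub /= !subrr !mul0r subrr eqxx.
have hbc : cbc q r != 0.
  apply/eqP => h; move: (N_BC O k nq nr); rewrite -eB -eC h mulr0 expr0n /= => /sqdist0 e.
  by move: hD; rewrite e /cross /vsub /=; apply/negP; rewrite negbK; apply/eqP; ring.
have hca : cca p r != 0.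
  apply/eqP => h; move: (N_CA O k np nr); rewrite -eA -eC h mulr0 expr0n /= => /sqdist0 e.
  by move: hD; rewrite e /cross /vsub /= !subrr ?mul0r ?mulr0 subrr eqxx.
have [q' [r' [nq' nr' eq' er' hs3]]] := sign_adjust nq nr hab hbc hca.
exists O, k, p, q', r'; refine (conj k0 (conj np (conj nq' (conj nr' (conj eA (conj _ (conj _ hs3))))))).

  by rewrite eB; have -> : cB O k q = fr O k (cm (hs q) (hs q)) by []; rewrite -eq'.
by rewrite eC; have -> : cC O k r = fr O k (cm (hs r) (hs r)) by []; rewrite -er'.
Qed.
End Frame.

Unset Implicit Arguments.
Set Strict Implicit.

Theorem theorem5p2 (R : realType) (A B C I H HA HB HC Oa Ob Oc OA OB OC : point R) :
  noncollinear A B C ->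
  is_incenter I A B C ->
  is_orthocenter H A B C ->
  is_orthocenter HA B I C ->
  is_orthocenter HB C I A ->
  is_orthocenter HC A I B ->
  is_circumcenter Oa HA B C ->
  is_circumcenter Ob HB C A ->
  is_circumcenter Oc HC B A ->
  is_circumcenter OA A HB HC ->
  is_circumcenter OB B HC HA ->
  is_circumcenter OC C HA HB ->
  OA = point_reflection (midpoint H I) Oa /\
  OB = point_reflection (midpoint H I) Ob /\
  OC = point_reflection (midpoint H I) Oc.
Proof.
move=> Hnc Hin HH HHA HHB HHC HOa HOb HOc HOA HOB HOC.
have [O [k [p [q [r [k0 [np [nq [nr [eA [eB [eC Hs]]]]]]]]]]]] := frame Hnc.
subst A B C.
exact: (assembly k0 np nq nr Hs Hnc Hin HH HHA HHB HHC HOa HOb HOc HOA HOB HOC).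
Qed.
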